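(* Let $\eta>0$. For all sufficiently large $\ell$, the fundamental eigenvalue $\omega_\ell^2$ satisfies $$\frac{k^2}{2}\le\frac{\omega_\ell^2}{\ell(\ell+1)}\le k^2+\eta.$$
   Context: Fix $M>0$, $k>0$; $\Delta(r)=r^2+k^2r^4-2Mr$, $w:=\Delta/r^4$, viewed as a function of $r^\star$ defined by $dr^\star/dr=r^2/\Delta$, $r^\star(r=+\infty)=\pi/2$; $r^\star_{3M}=r^\star(r=3M)$; prime is $d/dr^\star$. For $\ell\ge2$, $\omega_\ell^2$ is defined as $$\omega_\ell^2=\inf_{R\in H^1_0((r^\star_{3M},\pi/2])\setminus\{0\}}\frac{\int_{r^\star_{3M}}^{\pi/2}\big((R')^2+w(\ell(\ell+1)-\frac{6M}{r})R^2\big)dr^\star+\frac{6Mk^2}{\ell(\ell+1)-2}R(\frac\pi2)^2}{\int_{r^\star_{3M}}^{\pi/2}R^2\,dr^\star+\frac{12M}{\ell(\ell+1)(\ell(\ell+1)-2)}R(\frac\pi2)^2},$$ where $H^1_0((r^\star_{3M},\pi/2])$ is the $H^1$-closure of smooth functions compactly supported in $(r^\star_{3M},\pi/2]$; this infimum is attained and is the lowest eigenvalue of $\omega^2R=-R''+w(\ell(\ell+1)-\frac{6M}{r})R$, $R(r^\star_{3M})=0$, $(-2\omega^2R+\frac{\ell(\ell+1)(\ell(\ell+1)-2)}{6M}R'+k^2\ell(\ell+1)R)(\pi/2)=0$. *)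

(* Defs.v *)
From Stdlib Require Import Reals Lra ClassicalEpsilon.
From Coquelicot Require Import Coquelicot.
Open Scope R_scope.

Definition Delta (M k r : R) : R := r ^ 2 + k ^ 2 * r ^ 4 - 2 * M * r.

(* tortoise coordinate: dr*/dr = r^2/Delta, r*(+oo) = pi/2, i.e.
   r*(r) = pi/2 - \int_r^{+oo} s^2/Delta(s) ds   (used for r >= 3M, where Delta > 0) *)
Definition rstar (M k r : R) : R :=
  PI / 2 - RInt_gen (fun s => s ^ 2 / Delta M k s) (at_point r) (Rbar_locally p_infty).

Definition rstar3M (M k : R) : R := rstar M k (3 * M).

(* r as a function of r* on [r*_{3M}, pi/2): the (unique) r >= 3M with r*(r) = x *)
Definition r_of (M k x : R) : R :=
  epsilon (inhabits 0) (fun r => 3 * M <= r /\ rstar M k r = x).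

Definition w (M k x : R) : R := Delta M k (r_of M k x) / (r_of M k x) ^ 4.

Definition Lam (l : nat) : R := INR l * (INR l + 1).

Definition V (M k : R) (l : nat) (x : R) : R :=
  w M k x * (Lam l - 6 * M / r_of M k x).

(* smooth functions compactly supported in (r*_{3M}, pi/2]: restrictions of
   smooth functions on R that vanish on a neighbourhood (-oo, r*_{3M}+delta] *)
Definition admissible (M k : R) (f : R -> R) : Prop :=
  (forall (n : nat) (x : R), ex_derive_n f n x) /\
  (exists delta, 0 < delta /\ forall x, x <= rstar3M M k + delta -> f x = 0) /\
  (exists x, rstar3M M k < x <= PI / 2 /\ f x <> 0).

Definition numer (M k : R) (l : nat) (f : R -> R) : R :=
  RInt (fun x => (Derive f x) ^ 2 + V M k l x * (f x) ^ 2) (rstar3M M k) (PI / 2)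
  + 6 * M * k ^ 2 / (Lam l - 2) * (f (PI / 2)) ^ 2.

Definition denom (M k : R) (l : nat) (f : R -> R) : R :=
  RInt (fun x => (f x) ^ 2) (rstar3M M k) (PI / 2)
  + 12 * M / (Lam l * (Lam l - 2)) * (f (PI / 2)) ^ 2.

Definition omega2 (M k : R) (l : nat) : Rbar :=
  Glb_Rbar (fun q => exists f, admissible M k f /\ q = numer M k l f / denom M k l f).

(* Main.v *)
Require Import Defs.
From Stdlib Require Import Reals.
From Coquelicot Require Import Coquelicot.
Open Scope R_scope.

Require Import Defs.
From Stdlib Require Import Reals Lra Lia ZArith Classical ClassicalEpsilon.
From Coquelicot Require Import Coquelicot.
Require Import Defs.
Open Scope R_scope.

Ltac toR := match goal with |- @eq _ ?a ?b => change (@eq R a b) end.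

Lemma locally_gt (c t : R) : c < t -> locally t (fun y => c < y).
Proof.
  intros H. assert (Hp : 0 < t - c) by lra. exists (mkposreal _ Hp).
  intros y Hy. change (Rabs (y - t) < t - c) in Hy. apply Rabs_def2 in Hy. lra.
Qed.

Lemma is_RInt_unique_R (f : R -> R) a b (l : R) : is_RInt f a b l -> RInt f a b = l.
Proof. exact (@is_RInt_unique R_CompleteNormedModule f a b l). Qed.
Lemma RInt_correct_R (f : R -> R) a b : ex_RInt f a b -> is_RInt f a b (RInt f a b).
Proof. exact (@RInt_correct R_CompleteNormedModule f a b). Qed.
Lemma ex_RInt_cont_R (f : R -> R) a b : (forall z, Rmin a b <= z <= Rmax a b -> continuous f z) -> ex_RInt f a b.
Proof. exact (@ex_RInt_continuous R_CompleteNormedModule f a b). Qed.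
Lemma ex_derive_cont_R (f : R -> R) x : ex_derive f x -> continuous f x.
Proof. exact (@ex_derive_continuous R_AbsRing R_NormedModule f x). Qed.

Definition phi (M k s : R) : R := s ^ 2 / Delta M k s.
Definition Fr (M k r : R) : R := RInt (phi M k) (3 * M) r.

Lemma Delta_ge M k s : 0 < M -> 2 * M <= s -> k^2 * s^4 <= Delta M k s.
Proof. intros HM Hs. unfold Delta. assert (0 <= s * (s - 2*M)) by (apply Rmult_le_pos; lra). nra. Qed.

Lemma Delta_pos M k s : 0 < M -> 0 < k -> 2 * M <= s -> 0 < Delta M k s.
Proof. intros HM Hk Hs. eapply Rlt_le_trans; [|apply Delta_ge; auto].
  apply Rmult_lt_0_compat; apply pow_lt; lra. Qed.

Lemma phi_ex_derive M k s : 0 < M -> 0 < k -> 2 * M <= s -> ex_derive (phi M k) s.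
Proof.
  intros HM Hk Hs. assert (H := Delta_pos M k s HM Hk Hs).
  unfold phi, Delta in *. auto_derive. lra.
Qed.

Lemma phi_cont M k s : 0 < M -> 0 < k -> 2 * M <= s -> continuous (phi M k) s.
Proof. intros. apply (ex_derive_continuous (phi M k)), phi_ex_derive; auto. Qed.

Lemma phi_pos M k s : 0 < M -> 0 < k -> 2 * M <= s -> 0 < phi M k s.
Proof. intros HM Hk Hs. unfold phi. apply Rdiv_lt_0_compat. apply pow_lt; lra. apply Delta_pos; auto. Qed.

Lemma phi_le M k s : 0 < M -> 0 < k -> 2 * M <= s -> phi M k s <= / (k^2 * s^2).
Proof.
  intros HM Hk Hs. unfold phi. assert (H := Delta_ge M k s HM Hs).
  assert (0 < k^2 * s^4) by (apply Rmult_lt_0_compat; apply pow_lt; lra).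
  assert (0 < s^2) by (apply pow_lt; lra).
  apply (Rmult_le_reg_r (Delta M k s)). lra.
  unfold Rdiv. rewrite Rmult_assoc, Rinv_l, Rmult_1_r by lra.
  apply (Rmult_le_reg_r (k^2 * s^2)). apply Rmult_lt_0_compat; apply pow_lt; lra.
  replace (/ (k ^ 2 * s ^ 2) * Delta M k s * (k ^ 2 * s ^ 2)) with (Delta M k s) by (field; repeat split; lra).
  replace (s^2 * (k^2 * s^2)) with (k^2 * s^4) by ring. lra.
Qed.

Lemma ex_RInt_phi M k x y : 0 < M -> 0 < k -> 2*M <= x -> 2*M <= y -> ex_RInt (phi M k) x y.
Proof.
  intros HM Hk Hx Hy. apply (@ex_RInt_continuous R_CompleteNormedModule). intros z Hz. apply phi_cont; auto.
  destruct Hz as [Hz _]. eapply Rle_trans; [|exact Hz]. apply Rmin_glb; auto.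
Qed.

Lemma Fr_derive M k r : 0 < M -> 0 < k -> 2*M < r -> is_derive (Fr M k) r (phi M k r).
Proof.
  intros HM Hk Hr. apply is_derive_RInt with (a := 3*M).
  - generalize (locally_gt (2*M) r Hr). apply filter_imp. intros y Hy.
    apply (@RInt_correct R_CompleteNormedModule), ex_RInt_phi; lra.
  - apply phi_cont; lra.
Qed.

Lemma Fr_cont M k r : 0 < M -> 0 < k -> 2*M < r -> continuous (Fr M k) r.
Proof. intros. apply (ex_derive_continuous (Fr M k)). eexists. apply Fr_derive; auto. Qed.

Lemma Fr_diff M k r1 r2 : 0 < M -> 0 < k -> 2*M <= r1 -> 2*M <= r2 ->
  Fr M k r2 - Fr M k r1 = RInt (phi M k) r1 r2.
Proof.
  intros HM Hk H1 H2. unfold Fr.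
  rewrite <- (RInt_Chasles (phi M k) (3*M) r1 r2) by (apply ex_RInt_phi; lra).
  change (plus (RInt (phi M k) (3 * M) r1) (RInt (phi M k) r1 r2)) with (RInt (phi M k) (3 * M) r1 + RInt (phi M k) r1 r2).
  ring.
Qed.

Lemma Fr_lt M k r1 r2 : 0 < M -> 0 < k -> 2*M <= r1 -> r1 < r2 -> Fr M k r1 < Fr M k r2.
Proof.
  intros HM Hk H1 H2. cut (0 < Fr M k r2 - Fr M k r1). lra.
  rewrite Fr_diff by lra. apply RInt_gt_0; auto.
  - intros x Hx. apply phi_pos; lra.
  - intros x Hx. apply phi_cont; lra.
Qed.

Lemma Fr_le M k r1 r2 : 0 < M -> 0 < k -> 2*M <= r1 -> r1 <= r2 -> Fr M k r1 <= Fr M k r2.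
Proof. intros HM Hk H1 H2. destruct (Req_dec r1 r2). subst; lra. apply Rlt_le, Fr_lt; lra. Qed.

Lemma Fr_3M M k : Fr M k (3*M) = 0.
Proof. unfold Fr. rewrite RInt_point. reflexivity. Qed.

Lemma Fr_bound M k r : 0 < M -> 0 < k -> 3*M <= r -> Fr M k r <= / (k^2 * (3*M)).
Proof.
  intros HM Hk Hr. unfold Fr.
  assert (Hk2 : 0 < k^2) by (apply pow_lt; lra).
  set (g := fun s => / (k^2 * s^2)).
  assert (Hg : is_RInt g (3*M) r (minus (- / (k^2 * r)) (- / (k^2 * (3*M))))).
  { apply (is_RInt_derive (fun s => - / (k^2 * s)) g).
    - intros x Hx. rewrite Rmin_left in Hx by lra. rewrite Rmax_right in Hx by lra.
      unfold g. auto_derive.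
      + apply Rgt_not_eq. apply Rmult_lt_0_compat; [nra|lra].
      + toR. field. lra.
    - intros x Hx. rewrite Rmin_left in Hx by lra. rewrite Rmax_right in Hx by lra.
      apply (ex_derive_continuous g). unfold g. auto_derive.
      apply Rgt_not_eq. apply Rmult_lt_0_compat; [nra|]. nra. }
  assert (Hge : ex_RInt g (3*M) r) by (eexists; exact Hg).
  apply is_RInt_unique_R in Hg.
  assert (Hle : RInt (phi M k) (3 * M) r <= RInt g (3*M) r).
  { apply RInt_le; auto.
    - apply ex_RInt_phi; lra.
    - intros x Hx. apply phi_le; lra. }
  rewrite Hg in Hle. change (minus (- / (k ^ 2 * r)) (- / (k ^ 2 * (3 * M)))) with ((- / (k ^ 2 * r)) - (- / (k ^ 2 * (3 * M)))) in Hle.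
  assert (0 < / (k^2 * r)) by (apply Rinv_0_lt_compat; nra). lra.
Qed.

Lemma I_exists M k : 0 < M -> 0 < k -> exists I,
  (forall r, 3*M <= r -> Fr M k r < I) /\
  (forall eps, 0 < eps -> exists R, 3*M <= R /\ I - eps < Fr M k R).
Proof.
  intros HM Hk.
  set (E := fun y => exists r, 3*M <= r /\ y = Fr M k r).
  assert (Hb : bound E).
  { exists (/ (k^2 * (3*M))). intros y [r [Hr ->]]. apply Fr_bound; auto. }
  assert (Hne : exists y, E y) by (exists (Fr M k (3*M)); exists (3*M); split; [lra|reflexivity]).
  destruct (completeness E Hb Hne) as [I [HI1 HI2]].
  exists I. split.
  - intros r Hr. apply Rlt_le_trans with (Fr M k (r+1)).
    + apply Fr_lt; lra.
    + apply HI1. exists (r+1); split; [lra|reflexivity].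
  - intros eps He. apply NNPP. intros Hn.
    assert (Hub : is_upper_bound E (I - eps)).
    { intros y [r [Hr ->]]. apply Rnot_lt_le. intros Hlt. apply Hn. exists r; split; auto. }
    apply HI2 in Hub. lra.
Qed.

Lemma rstar_eq M k I : 0 < M -> 0 < k ->
  (forall r, 3*M <= r -> Fr M k r < I) ->
  (forall eps, 0 < eps -> exists R, 3*M <= R /\ I - eps < Fr M k R) ->
  forall r, 3*M <= r -> rstar M k r = PI/2 - (I - Fr M k r).
Proof.
  intros HM Hk HI1 HI2 r Hr. unfold rstar. f_equal. f_equal.
  apply (@is_RInt_gen_unique R_CompleteNormedModule (at_point r) (Rbar_locally p_infty) _ _).
  apply (is_RInt_gen_ext (Derive (Fr M k))).
  { apply (Filter_prod _ _ _ (fun x => x = r) (fun y => r < y)).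
    - reflexivity.
    - exists r; auto.
    - intros x y -> Hy z Hz. simpl in Hz. rewrite Rmin_left in Hz by lra. rewrite Rmax_right in Hz by lra.
      apply is_derive_unique, Fr_derive; lra. }
  apply is_RInt_gen_Derive.
  - apply (Filter_prod _ _ _ (fun x => x = r) (fun y => r < y)).
    + reflexivity.
    + exists r; auto.
    + intros x y -> Hy z Hz. simpl in Hz. rewrite Rmin_left in Hz by lra. rewrite Rmax_right in Hz by lra.
      eexists; apply Fr_derive; lra.
  - apply (Filter_prod _ _ _ (fun x => x = r) (fun y => r < y)).
    + reflexivity.
    + exists r; auto.
    + intros x y -> Hy z Hz. simpl in Hz. rewrite Rmin_left in Hz by lra. rewrite Rmax_right in Hz by lra.
      apply continuous_ext_loc with (g := phi M k).
      * generalize (locally_gt (2*M) z ltac:(lra)). apply filter_imp. intros y0 Hy0.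
        symmetry. apply is_derive_unique, Fr_derive; lra.
      * apply phi_cont; lra.
  - intros P HP. unfold filtermap, at_point. apply locally_singleton in HP. exact HP.
  - apply filterlim_locally. intros eps. destruct (HI2 eps (cond_pos eps)) as [R [HR HRe]].
    exists (Rmax R (3*M)). intros x Hx.
    assert (HxR : R <= x) by (generalize (Rmax_l R (3*M)); lra).
    assert (Hx3 : 3*M <= x) by (generalize (Rmax_r R (3*M)); lra).
    change (Rabs (Fr M k x - I) < eps).
    assert (Fr M k R <= Fr M k x) by (apply Fr_le; lra).
    assert (Fr M k x < I) by (apply HI1; lra).
    apply Rabs_def1; lra.
Qed.

Lemma Fr_nonneg M k r : 0 < M -> 0 < k -> 3*M <= r -> 0 <= Fr M k r.
Proof. intros. rewrite <- (Fr_3M M k). apply Fr_le; lra. Qed.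

Lemma rof_spec M k I : 0 < M -> 0 < k ->
  (forall r, 3*M <= r -> Fr M k r < I) ->
  (forall eps, 0 < eps -> exists R, 3*M <= R /\ I - eps < Fr M k R) ->
  forall x, PI/2 - I < x < PI/2 ->
  3*M < r_of M k x /\ Fr M k (r_of M k x) = x - (PI/2 - I).
Proof.
  intros HM Hk HI1 HI2 x Hx.
  set (y := x - (PI/2 - I)).
  destruct (HI2 (I - y) ltac:(unfold y; lra)) as [Rb [HR HRy]].
  assert (H3 := Fr_3M M k).
  assert (HR' : 3*M < Rb).
  { destruct (Req_dec (3*M) Rb) as [He|He]; [|lra]. rewrite <- He in HRy. unfold y in HRy. lra. }
  destruct (Ranalysis5.IVT_interv (fun r => Fr M k r - y) (3*M) Rb) as [z [Hz Hz0]].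
  - intros a0 Ha0.
    change (continuity_pt (minus_fct (Fr M k) (fct_cte y)) a0).
    apply continuity_pt_minus.
    + apply continuity_pt_filterlim. apply Fr_cont; lra.
    + apply continuity_pt_const. intros ? ?; reflexivity.
  - exact HR'.
  - unfold y in *. lra.
  - unfold y in *. lra.
  - assert (Hex : exists r, 3*M <= r /\ rstar M k r = x).
    { exists z. split; [lra|]. rewrite (rstar_eq M k I) by (auto; lra). unfold y in Hz0. lra. }
    assert (Hs := epsilon_spec (inhabits 0) (fun r => 3*M <= r /\ rstar M k r = x) Hex).
    fold (r_of M k x) in Hs. destruct Hs as [Hs1 Hs2].
    rewrite (rstar_eq M k I) in Hs2 by auto.
    assert (HF : Fr M k (r_of M k x) = y) by (unfold y; lra).
    split; [|exact HF].
    destruct (Req_dec (3*M) (r_of M k x)) as [He|He]; [|lra].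
    rewrite <- He in HF. unfold y in HF. lra.
Qed.

Section dummy. End dummy.

Lemma rof_loc M k I : 0 < M -> 0 < k ->
  (forall r, 3*M <= r -> Fr M k r < I) ->
  (forall eps, 0 < eps -> exists R, 3*M <= R /\ I - eps < Fr M k R) ->
  forall r1 r2 x, 3*M <= r1 -> 3*M <= r2 -> Fr M k r1 < x - (PI/2 - I) < Fr M k r2 ->
  (PI/2 - I < x < PI/2) /\ r1 < r_of M k x < r2.
Proof.
  intros HM Hk HI1 HI2 r1 r2 x H1 H2 Hx.
  assert (Hn := Fr_nonneg M k r1 HM Hk H1). assert (HI := HI1 r2 H2).
  assert (Hab : PI/2 - I < x < PI/2) by lra.
  destruct (rof_spec M k I HM Hk HI1 HI2 x Hab) as [Hr HF].
  split; [exact Hab|]. split.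
  - apply Rnot_le_lt. intros Hle. assert (Fr M k (r_of M k x) <= Fr M k r1) by (apply Fr_le; lra). lra.
  - apply Rnot_le_lt. intros Hle. assert (Fr M k r2 <= Fr M k (r_of M k x)) by (apply Fr_le; lra). lra.
Qed.

Lemma rof_big M k I : 0 < M -> 0 < k ->
  (forall r, 3*M <= r -> Fr M k r < I) ->
  (forall eps, 0 < eps -> exists R, 3*M <= R /\ I - eps < Fr M k R) ->
  forall r1 x, 3*M <= r1 -> Fr M k r1 < x - (PI/2 - I) < I ->
  (PI/2 - I < x < PI/2) /\ r1 < r_of M k x.
Proof.
  intros HM Hk HI1 HI2 r1 x H1 Hx.
  assert (Hn := Fr_nonneg M k r1 HM Hk H1).
  assert (Hab : PI/2 - I < x < PI/2) by lra.
  destruct (rof_spec M k I HM Hk HI1 HI2 x Hab) as [Hr HF].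
  split; [exact Hab|].
  apply Rnot_le_lt. intros Hle. assert (Fr M k (r_of M k x) <= Fr M k r1) by (apply Fr_le; lra). lra.
Qed.

Definition u (M k x : R) : R :=
  if Rle_dec x (rstar3M M k) then / (3*M)
  else if Rlt_dec x (PI/2) then / r_of M k x else 0.

Lemma cont_eps (f : R -> R) x0 :
  (forall eps, 0 < eps -> exists d, 0 < d /\ forall x, Rabs (x - x0) < d -> Rabs (f x - f x0) < eps) ->
  continuous f x0.
Proof.
  intros H. apply filterlim_locally. intros eps.
  destruct (H eps (cond_pos eps)) as [d [Hd H']]. exists (mkposreal d Hd).
  intros y Hy. change (Rabs (f y - f x0) < eps). apply H'. exact Hy.
Qed.

Lemma inv_close c p q eps : 0 < c -> c <= p -> c <= q -> 0 < eps -> Rabs (p - q) < c*c*eps ->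
  Rabs (/p - /q) < eps.
Proof.
  intros Hc Hp Hq He H.
  replace (/p - /q) with ((q - p) * /(p*q)) by (field; lra).
  rewrite Rabs_mult, (Rabs_right (/(p*q))) by (apply Rle_ge, Rlt_le, Rinv_0_lt_compat; nra).
  rewrite Rabs_minus_sym.
  apply (Rmult_lt_reg_r (p*q)); [nra|]. rewrite Rmult_assoc, Rinv_l, Rmult_1_r by nra.
  assert (c*c <= p*q) by (apply Rmult_le_compat; lra). nra.
Qed.

Lemma u_cont M k I : 0 < M -> 0 < k ->
  (forall r, 3*M <= r -> Fr M k r < I) ->
  (forall eps, 0 < eps -> exists R, 3*M <= R /\ I - eps < Fr M k R) ->
  forall x0, continuous (u M k) x0.
Proof.
  intros HM Hk HI1 HI2 x0.
  assert (Ha : rstar3M M k = PI/2 - I).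
  { unfold rstar3M. rewrite (rstar_eq M k I) by (auto; lra). rewrite Fr_3M. ring. }
  assert (HIp : 0 < I) by (generalize (HI1 (3*M) ltac:(lra)); rewrite Fr_3M; lra).
  set (a := PI/2 - I) in *.
  assert (uL : forall x, x <= a -> u M k x = / (3*M)).
  { intros x Hx. unfold u. rewrite Ha. destruct (Rle_dec x a); [reflexivity|contradiction]. }
  assert (uM : forall x, a < x < PI/2 -> u M k x = / r_of M k x).
  { intros x Hx. unfold u. rewrite Ha. destruct (Rle_dec x a); [lra|].
    destruct (Rlt_dec x (PI/2)); [reflexivity|lra]. }
  assert (uR : forall x, PI/2 <= x -> u M k x = 0).
  { intros x Hx. unfold u. rewrite Ha. destruct (Rle_dec x a); [unfold a in *; lra|].
    destruct (Rlt_dec x (PI/2)); [lra|reflexivity]. }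
  assert (Hc : 0 < 3*M) by lra.
  apply cont_eps. intros eps He.
  destruct (Rtotal_order x0 a) as [Hlt|[Heq|Hgt]].
  - exists (a - x0). split; [lra|]. intros x Hx. apply Rabs_def2 in Hx.
    rewrite uL, uL by lra. rewrite Rminus_diag, Rabs_R0. lra.
  - set (r2 := 3*M + (3*M)*(3*M)*eps).
    assert (Hr2 : 3*M < r2) by (unfold r2; assert (0 < (3*M)*(3*M)*eps) by (apply Rmult_lt_0_compat; nra); lra).
    assert (Hd : 0 < Fr M k r2) by (rewrite <- (Fr_3M M k); apply Fr_lt; lra).
    exists (Fr M k r2). split; [exact Hd|]. intros x Hx. apply Rabs_def2 in Hx.
    rewrite (uL x0) by lra.
    destruct (Rle_dec x a) as [Hxa|Hxa].
    + rewrite uL by lra. rewrite Rminus_diag, Rabs_R0. lra.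
    + destruct (rof_loc M k I HM Hk HI1 HI2 (3*M) r2 x ltac:(lra) ltac:(lra)) as [Hab Hr].
      { rewrite Fr_3M. fold a. lra. }
      rewrite uM by exact Hab.
      apply inv_close with (c := 3*M); try lra.
      rewrite Rabs_right by lra. unfold r2 in Hr. lra.
  - destruct (Rtotal_order x0 (PI/2)) as [Hlb|[Heqb|Hgtb]].
    + destruct (rof_spec M k I HM Hk HI1 HI2 x0 ltac:(fold a; lra)) as [Hr0 HF0].
      fold a in HF0. set (r0 := r_of M k x0) in *.
      set (e := (3*M)*(3*M)*eps).
      assert (He' : 0 < e) by (unfold e; apply Rmult_lt_0_compat; nra).
      set (r1 := Rmax (3*M) (r0 - e)). set (r2 := r0 + e).
      assert (Hr1a : 3*M <= r1) by apply Rmax_l.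
      assert (Hr1b : r0 - e <= r1) by apply Rmax_r.
      assert (Hr1c : r1 < r0) by (apply Rmax_lub_lt; lra).
      assert (Hd1 : Fr M k r1 < Fr M k r0) by (apply Fr_lt; lra).
      assert (Hd2 : Fr M k r0 < Fr M k r2) by (apply Fr_lt; unfold r2; lra).
      exists (Rmin (Fr M k r0 - Fr M k r1) (Fr M k r2 - Fr M k r0)). split.
      { apply Rmin_glb_lt; lra. }
      intros x Hx.
      assert (Hm1 := Rmin_l (Fr M k r0 - Fr M k r1) (Fr M k r2 - Fr M k r0)).
      assert (Hm2 := Rmin_r (Fr M k r0 - Fr M k r1) (Fr M k r2 - Fr M k r0)).
      apply Rabs_def2 in Hx.
      destruct (rof_loc M k I HM Hk HI1 HI2 r1 r2 x Hr1a ltac:(unfold r2; lra)) as [Hab Hr].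
      { fold a. lra. }
      rewrite uM by exact Hab. rewrite (uM x0) by lra. fold r0.
      apply inv_close with (c := 3*M); try lra.
      apply Rabs_def1; unfold r2 in Hr; fold e; lra.
    + set (Rb := Rmax (3*M) (2/eps)).
      assert (HRb1 : 3*M <= Rb) by apply Rmax_l.
      assert (HRb2 : 2/eps <= Rb) by apply Rmax_r.
      assert (HRb3 : 0 < 2/eps) by (apply Rdiv_lt_0_compat; lra).
      assert (HIR := HI1 Rb HRb1).
      exists (I - Fr M k Rb). split; [lra|]. intros x Hx. apply Rabs_def2 in Hx.
      rewrite (uR x0) by lra.
      destruct (Rle_dec (PI/2) x) as [Hxb|Hxb].
      * rewrite uR by lra. rewrite Rminus_diag, Rabs_R0. lra.
      * destruct (rof_big M k I HM Hk HI1 HI2 Rb x HRb1) as [Hab Hr].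
        { fold a. unfold a. lra. }
        rewrite uM by exact Hab. rewrite Rminus_0_r.
        assert (Hp : 0 < r_of M k x) by lra.
        rewrite Rabs_right by (apply Rle_ge, Rlt_le, Rinv_0_lt_compat; lra).
        apply Rlt_le_trans with (/ Rb). { apply Rinv_lt_contravar; nra. }
        apply Rle_trans with (/ (2/eps)). { apply Rinv_le_contravar; lra. }
        replace (/ (2/eps)) with (eps/2) by (field; lra). lra.
    + exists (x0 - PI/2). split; [lra|]. intros x Hx. apply Rabs_def2 in Hx.
      rewrite uR, uR by lra. rewrite Rminus_diag, Rabs_R0. lra.
Qed.

Lemma cont_plus_R (f g : R -> R) x : continuous f x -> continuous g x -> continuous (fun y => f y + g y) x.
Proof.
  intros Hf Hg. apply continuity_pt_filterlim. apply continuity_pt_filterlim in Hf. apply continuity_pt_filterlim in Hg.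
  exact (continuity_pt_plus f g x Hf Hg).
Qed.
Lemma cont_mult_R (f g : R -> R) x : continuous f x -> continuous g x -> continuous (fun y => f y * g y) x.
Proof.
  intros Hf Hg. apply continuity_pt_filterlim. apply continuity_pt_filterlim in Hf. apply continuity_pt_filterlim in Hg.
  exact (continuity_pt_mult f g x Hf Hg).
Qed.
Lemma cont_sq_R (f : R -> R) x : continuous f x -> continuous (fun y => f y ^ 2) x.
Proof.
  intros Hf. apply (continuous_ext (fun y => f y * f y)). { intros; simpl; lra. }
  apply cont_mult_R; auto.
Qed.
Lemma RInt_scal_R (f : R -> R) a b c : ex_RInt f a b -> RInt (fun x => c * f x) a b = c * RInt f a b.
Proof. intros H. exact (@RInt_scal R_CompleteNormedModule f a b c H). Qed.
Lemma RInt_plus_R (f g : R -> R) a b : ex_RInt f a b -> ex_RInt g a b ->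
  RInt (fun x => f x + g x) a b = RInt f a b + RInt g a b.
Proof. intros H1 H2. exact (@RInt_plus R_CompleteNormedModule f g a b H1 H2). Qed.
Lemma RInt_Chasles_R (f : R -> R) a b c : ex_RInt f a b -> ex_RInt f b c ->
  RInt f a b + RInt f b c = RInt f a c.
Proof. intros H1 H2. exact (@RInt_Chasles R_CompleteNormedModule f a b c H1 H2). Qed.

Lemma pos_int (f : R -> R) a b x0 : (forall x, continuous f x) -> a < x0 < b -> f x0 <> 0 ->
  0 < RInt (fun x => f x ^ 2) a b.
Proof.
  intros Hc Hx Hf.
  set (g := fun x => f x ^ 2).
  assert (Hgc : forall x, continuous g x) by (intros; apply cont_sq_R, Hc).
  assert (Hg0 : 0 < g x0) by (unfold g; apply pow2_gt_0; auto).
  assert (Hgnn : forall x, 0 <= g x) by (intros; unfold g; apply pow2_ge_0).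
  assert (Hl : forall eps : posreal, locally x0 (fun x => ball (g x0) eps (g x))).
  { intros eps. exact (proj1 (@filterlim_locally _ _ (locally x0) _ g (g x0)) (Hgc x0) eps). }
  assert (Hg2 : 0 < g x0 / 2) by lra.
  destruct (Hl (mkposreal _ Hg2)) as [d Hd]. simpl in Hd.
  assert (Hd0 := cond_pos d).
  set (p := Rmax a (x0 - d/2)). set (q := Rmin b (x0 + d/2)).
  assert (Hp1 := Rmax_l a (x0 - d/2)). assert (Hp2 := Rmax_r a (x0 - d/2)).
  assert (Hq1 := Rmin_l b (x0 + d/2)). assert (Hq2 := Rmin_r b (x0 + d/2)).
  fold p in Hp1, Hp2. fold q in Hq1, Hq2.
  assert (Hp3 : p < x0) by (apply Rmax_lub_lt; lra).
  assert (Hq3 : x0 < q) by (apply Rmin_glb_lt; lra).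
  assert (Hex : forall s t, ex_RInt g s t) by (intros; apply ex_RInt_cont_R; intros; apply Hgc).
  rewrite <- (RInt_Chasles_R g a p b) by auto.
  rewrite <- (RInt_Chasles_R g p q b) by auto.
  assert (0 <= RInt g a p) by (apply RInt_ge_0; auto; lra).
  assert (0 <= RInt g q b) by (apply RInt_ge_0; auto; lra).
  assert (0 < RInt g p q).
  { apply RInt_gt_0; [lra| |intros; apply Hgc]. intros x Hx'. 
    assert (Hb : ball x0 d x).
    { change (Rabs (x - x0) < d). apply Rabs_def1; lra. }
    specialize (Hd x Hb). change (Rabs (g x - g x0) < g x0 / 2) in Hd. apply Rabs_def2 in Hd. lra. }
  lra.
Qed.

Definition Hp (M k L y : R) : R := (y^2 + k^2 - 2*M*y^3) * (L - 6*M*y).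

Lemma Hp_cont M k L y : continuous (Hp M k L) y.
Proof. apply ex_derive_cont_R. unfold Hp. auto_derive. exact I. Qed.

Lemma Hp_lower M k L y : 0 < M -> 6 <= L -> 0 <= y <= / (3*M) -> k^2 * (L - 2) <= Hp M k L y.
Proof.
  intros HM HL Hy. unfold Hp.
  assert (H3 : 3*M*y <= 1).
  { destruct Hy as [_ Hy]. apply (Rmult_le_compat_l (3*M)) in Hy; [|lra]. rewrite Rinv_r in Hy by lra. lra. }
  assert (HA : k^2 <= y^2 + k^2 - 2*M*y^3).
  { assert (0 <= y^2 * (1 - 2*M*y)) by (apply Rmult_le_pos; [apply pow2_ge_0|nra]). nra. }
  assert (HB : L - 2 <= L - 6*M*y) by nra.
  assert (0 <= k^2) by apply pow2_ge_0.
  apply Rmult_le_compat; lra.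
Qed.

Lemma Hp_upper M k L y : 0 < M -> 6 <= L -> 0 <= y <= / (3*M) -> Hp M k L y <= (k^2 + y^2) * L.
Proof.
  intros HM HL Hy. unfold Hp.
  assert (H3 : 3*M*y <= 1).
  { destruct Hy as [_ Hy]. apply (Rmult_le_compat_l (3*M)) in Hy; [|lra]. rewrite Rinv_r in Hy by lra. lra. }
  assert (HA : k^2 <= y^2 + k^2 - 2*M*y^3).
  { assert (0 <= y^2 * (1 - 2*M*y)) by (apply Rmult_le_pos; [apply pow2_ge_0|nra]). nra. }
  assert (HA2 : y^2 + k^2 - 2*M*y^3 <= k^2 + y^2).
  { assert (0 <= y^3) by (apply pow_le; lra). nra. }
  assert (HB : L - 2 <= L - 6*M*y) by nra.
  assert (HB2 : L - 6*M*y <= L) by nra.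
  assert (0 <= k^2) by apply pow2_ge_0.
  apply Rmult_le_compat; lra.
Qed.

Lemma rstar3M_eq M k I : 0 < M -> 0 < k ->
  (forall r, 3*M <= r -> Fr M k r < I) ->
  (forall eps, 0 < eps -> exists R, 3*M <= R /\ I - eps < Fr M k R) ->
  rstar3M M k = PI/2 - I.
Proof. intros HM Hk HI1 HI2. unfold rstar3M. rewrite (rstar_eq M k I) by (auto; lra). rewrite Fr_3M. ring. Qed.

Lemma u_mid M k I l : 0 < M -> 0 < k ->
  (forall r, 3*M <= r -> Fr M k r < I) ->
  (forall eps, 0 < eps -> exists R, 3*M <= R /\ I - eps < Fr M k R) ->
  forall x, PI/2 - I < x < PI/2 ->
  u M k x = / r_of M k x /\ 0 < u M k x <= / (3*M) /\ V M k l x = Hp M k (Lam l) (u M k x).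
Proof.
  intros HM Hk HI1 HI2 x Hx.
  destruct (rof_spec M k I HM Hk HI1 HI2 x Hx) as [Hr _].
  assert (Hu : u M k x = / r_of M k x).
  { unfold u. rewrite (rstar3M_eq M k I) by auto. destruct (Rle_dec x (PI/2 - I)); [lra|].
    destruct (Rlt_dec x (PI/2)); [reflexivity|lra]. }
  split; [exact Hu|]. rewrite Hu. split.
  - split. apply Rinv_0_lt_compat; lra. apply Rinv_le_contravar; lra.
  - unfold V, w, Delta, Hp. field. lra.
Qed.

Lemma RInt_ext_R (f g : R -> R) a b : (forall x, Rmin a b < x < Rmax a b -> f x = g x) -> RInt f a b = RInt g a b.
Proof. intros H. exact (@RInt_ext R_CompleteNormedModule f g a b H). Qed.

Lemma Lam_ge6 l : (2 <= l)%nat -> 6 <= Lam l.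
Proof. intros Hl. unfold Lam. assert (H := le_INR _ _ Hl). simpl in H. nra. Qed.

Lemma numer_int M k I l : 0 < M -> 0 < k ->
  (forall r, 3*M <= r -> Fr M k r < I) ->
  (forall eps, 0 < eps -> exists R, 3*M <= R /\ I - eps < Fr M k R) ->
  forall f, (forall x, continuous f x) -> (forall x, continuous (Derive f) x) ->
  ex_RInt (fun x => (Derive f x)^2 + Hp M k (Lam l) (u M k x) * (f x)^2) (rstar3M M k) (PI/2) /\
  RInt (fun x => (Derive f x)^2 + V M k l x * (f x)^2) (rstar3M M k) (PI/2) =
  RInt (fun x => (Derive f x)^2 + Hp M k (Lam l) (u M k x) * (f x)^2) (rstar3M M k) (PI/2).
Proof.
  intros HM Hk HI1 HI2 f Hf Hdf.
  assert (HIp : 0 < I) by (generalize (HI1 (3*M) ltac:(lra)); rewrite Fr_3M; lra).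
  rewrite (rstar3M_eq M k I) by auto.
  split.
  - apply ex_RInt_cont_R. intros z _.
    apply cont_plus_R. apply cont_sq_R, Hdf.
    apply cont_mult_R. 2: apply cont_sq_R, Hf.
    apply (continuous_comp (u M k) (Hp M k (Lam l))).
    apply (u_cont M k I); auto. apply Hp_cont.
  - apply RInt_ext_R. intros x Hx. rewrite Rmin_left in Hx by lra. rewrite Rmax_right in Hx by lra.
    destruct (u_mid M k I l HM Hk HI1 HI2 x Hx) as [_ [_ HV]]. rewrite HV. reflexivity.
Qed.

Lemma adm_cont M k f : admissible M k f -> (forall x, continuous f x) /\ (forall x, continuous (Derive f) x).
Proof.
  intros [Hs _]. split; intros x.
  - apply ex_derive_cont_R. exact (Hs 1%nat x).
  - apply ex_derive_cont_R. exact (Hs 2%nat x).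
Qed.

Lemma lower_bound M k I l : 0 < M -> 0 < k ->
  (forall r, 3*M <= r -> Fr M k r < I) ->
  (forall eps, 0 < eps -> exists R, 3*M <= R /\ I - eps < Fr M k R) ->
  (2 <= l)%nat -> forall f, admissible M k f ->
  k^2/2 * Lam l <= numer M k l f / denom M k l f.
Proof.
  intros HM Hk HI1 HI2 Hl f Hf.
  assert (HIp : 0 < I) by (generalize (HI1 (3*M) ltac:(lra)); rewrite Fr_3M; lra).
  assert (HL := Lam_ge6 l Hl). set (L := Lam l) in *.
  destruct (adm_cont M k f Hf) as [Hfc Hdfc].
  assert (Ha := rstar3M_eq M k I HM Hk HI1 HI2).
  destruct (numer_int M k I l HM Hk HI1 HI2 f Hfc Hdfc) as [Hex Heq].
  assert (Hexf : ex_RInt (fun x => f x ^ 2) (rstar3M M k) (PI/2)).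
  { apply ex_RInt_cont_R. intros; apply cont_sq_R, Hfc. }
  set (S := RInt (fun x => f x ^ 2) (rstar3M M k) (PI/2)).
  set (T := f (PI/2) ^ 2).
  assert (HS : 0 <= S). { apply RInt_ge_0; auto. lra. intros; apply pow2_ge_0. }
  assert (HT : 0 <= T) by apply pow2_ge_0.
  assert (HN : k^2 * (L-2) * S <= RInt (fun x => (Derive f x)^2 + V M k l x * (f x)^2) (rstar3M M k) (PI/2)).
  { rewrite Heq. unfold S. rewrite <- RInt_scal_R by exact Hexf.
    apply RInt_le; [lra| |exact Hex|].
    - apply ex_RInt_cont_R. intros. apply cont_mult_R. apply continuous_const. apply cont_sq_R, Hfc.
    - intros x Hx. rewrite Ha in Hx. destruct (u_mid M k I l HM Hk HI1 HI2 x Hx) as [_ [Hu _]].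
      assert (Hh := Hp_lower M k L (u M k x) HM HL ltac:(lra)).
      assert (0 <= Derive f x ^ 2) by apply pow2_ge_0.
      assert (0 <= f x ^ 2) by apply pow2_ge_0.
      fold L. nra. }
  assert (HD : 0 < denom M k l f).
  { unfold denom. fold S T L.
    assert (Hc : 0 < 12 * M / (L * (L - 2))) by (apply Rdiv_lt_0_compat; nra).
    destruct Hf as [_ [_ [x0 [Hx0 Hfx0]]]].
    destruct (Req_dec x0 (PI/2)) as [He|He].
    - subst x0. assert (0 < T) by (unfold T; apply pow2_gt_0; auto). nra.
    - assert (0 < S). { unfold S. apply (pos_int f _ _ x0); auto. lra. } nra. }
  apply (Rmult_le_reg_r (denom M k l f)); [exact HD|].
  replace (numer M k l f / denom M k l f * denom M k l f) with (numer M k l f) by (field; lra).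
  unfold numer, denom. fold S T L.
  assert (Hid : k ^ 2 / 2 * L * (12 * M / (L * (L - 2)) * T) = 6 * M * k ^ 2 / (L - 2) * T) by (field; lra).
  assert (Hsq : 0 <= k^2) by apply pow2_ge_0.
  assert (k^2 * (L/2 - 2) * S >= 0) by (apply Rle_ge, Rmult_le_pos; [apply Rmult_le_pos|]; lra).
  nra.
Qed.

Fixpoint peval (p : list R) (y : R) : R :=
  match p with nil => 0 | cons c q => c + y * peval q y end.

Lemma peval_add : forall p q, exists s, forall y, peval s y = peval p y + peval q y.
Proof.
  induction p as [|a p IH]; intros q.
  - exists q; simpl; intros; ring.
  - destruct q as [|d q].
    + exists (cons a p); simpl; intros; ring.
    + destruct (IH q) as [s Hs]. exists (cons (a+d) s). simpl; intros; rewrite Hs; ring.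
Qed.

Lemma peval_scal : forall p c, exists s, forall y, peval s y = c * peval p y.
Proof.
  induction p as [|a p IH]; intros c.
  - exists nil; simpl; intros; ring.
  - destruct (IH c) as [s Hs]. exists (cons (c*a) s). simpl; intros; rewrite Hs; ring.
Qed.

Lemma is_derive_val (f : R -> R) x l l' : l = l' -> is_derive f x l -> is_derive f x l'.
Proof. intros ->; auto. Qed.

Lemma peval_derive : forall p, exists d, forall y, is_derive (peval p) y (peval d y).
Proof.
  induction p as [|a p IH].
  - exists nil. intros y. simpl. apply (is_derive_const 0 y).
  - destruct IH as [d Hd].
    destruct (peval_add p (cons 0 d)) as [s Hs]. exists s. intros y. rewrite Hs.
    simpl.
    assert (H := is_derive_mult (fun y => y) (peval p) y 1 (peval d y) (is_derive_id y) (Hd y) (fun n m => Rmult_comm n m)).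
    assert (H2 := is_derive_plus (fun _ => a) (fun y => y * peval p y) y 0 _ (is_derive_const a y) H).
    simpl in H2. unfold plus, mult in H2; simpl in H2.
    refine (is_derive_val _ _ _ _ _ H2). simpl. lra.
Qed.


Definition E (c : R) (p : list R) (t : R) : R :=
  if Rlt_dec c t then peval p (/(t-c)) * exp (-/(t-c)) else 0.

Lemma locally_lt (c t : R) : t < c -> locally t (fun y => y < c).
Proof.
  intros H. assert (Hp : 0 < c - t) by lra. exists (mkposreal _ Hp).
  intros y Hy. change (Rabs (y - t) < c - t) in Hy. apply Rabs_def2 in Hy. lra.
Qed.

Lemma E_derive_pos c p d t : (forall y, is_derive (peval p) y (peval d y)) -> c < t ->
  is_derive (E c p) t ((/(t-c))^2 * (peval p (/(t-c)) - peval d (/(t-c))) * exp (-/(t-c))).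
Proof.
  intros Hd Hct.
  apply is_derive_ext_loc with (f := fun t => peval p (/(t-c)) * exp (-/(t-c))).
  { generalize (locally_gt c t Hct). apply filter_imp. intros y Hy. unfold E.
    destruct (Rlt_dec c y); [reflexivity| lra]. }
  auto_derive.
  - repeat split; try lra. eexists; apply Hd.
  - rewrite (is_derive_unique _ _ _ (Hd _)). toR. unfold Rminus. field. lra.
Qed.

Lemma peval_bound : forall q, exists C n, 0 < C /\ forall y, 0 <= y -> Rabs (peval q y) <= C * (1+y)^n.
Proof.
  induction q as [|a q IH].
  - exists 1, 0%nat. split; [lra|]. intros y _. simpl. rewrite Rabs_R0. lra.
  - destruct IH as [C [n [HC H]]]. exists (Rabs a + C), (S n). split.
    { generalize (Rabs_pos a); lra. }
    intros y Hy. simpl.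
    assert (H1 : 1 <= (1+y)^n) by (apply pow_R1_Rle; lra).
    assert (H2 : 0 <= (1+y)^n) by lra.
    specialize (H y Hy).
    eapply Rle_trans. apply Rabs_triang. rewrite Rabs_mult, (Rabs_right y) by lra.
    assert (Ha := Rabs_pos a).
    assert (y * Rabs (peval q y) <= y * (C * (1+y)^n)) by (apply Rmult_le_compat_l; lra).
    assert (H3 : 1*1 <= (1+y) * (1+y)^n) by (apply Rmult_le_compat; lra).
    assert (Rabs a * 1 <= Rabs a * ((1+y) * (1+y)^n)) by (apply Rmult_le_compat_l; lra).
    assert (H5 : y*(C*(1+y)^n) <= C*((1+y)*(1+y)^n)).
    { assert (0 <= C * (1+y)^n) by (apply Rmult_le_pos; lra). nra. }
    lra.
Qed.

Lemma exp_pow_INR : forall n x, exp x ^ n = exp (INR n * x).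
Proof.
  induction n as [|n IH]; intros x.
  - simpl. rewrite Rmult_0_l, exp_0. reflexivity.
  - simpl pow. rewrite IH, <- exp_plus, S_INR. f_equal. ring.
Qed.

Lemma poly_exp_bound : forall n z, 0 < z -> z^n * exp(-z) <= (INR (S n))^(S n) / z.
Proof.
  intros n z Hz. set (K := INR (S n)).
  assert (HK : 0 < K) by (unfold K; apply lt_0_INR; lia).
  assert (Hexp : (z/K)^(S n) <= exp z).
  { replace (exp z) with (exp (z/K) ^ (S n)).
    - apply pow_incr. split. { apply Rlt_le, Rdiv_lt_0_compat; lra. }
      assert (Hq : 0 < z/K) by (apply Rdiv_lt_0_compat; lra).
      generalize (exp_ineq1 (z/K) ltac:(lra)). lra.
    - rewrite exp_pow_INR. fold K. f_equal. field. lra. }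
  assert (Hzm : 0 < z ^ (S n)) by (apply pow_lt; lra).
  assert (HKm : 0 < K ^ (S n)) by (apply pow_lt; lra).
  unfold Rdiv in Hexp; rewrite Rpow_mult_distr, pow_inv in Hexp.
  rewrite exp_Ropp.
  assert (He : 0 < exp z) by apply exp_pos.
  apply (Rmult_le_reg_r (exp z * z)). nra.
  replace (z ^ n * / exp z * (exp z * z)) with (z^(S n)) by (simpl; field; lra).
  replace (K ^ S n / z * (exp z * z)) with (K ^ S n * exp z) by (field; lra).
  apply (Rmult_le_compat_l (K ^ S n)) in Hexp; [|lra].
  replace (K ^ S n * (z ^ S n * / K ^ S n)) with (z ^ S n) in Hexp by (field; lra). lra.
Qed.

Lemma peval_decay : forall q eps, 0 < eps -> exists Y, 0 < Y /\
  forall y, Y < y -> Rabs (peval q y * exp (-y)) < eps.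
Proof.
  intros q eps He. destruct (peval_bound q) as [C [n [HC Hb]]].
  set (K := INR (S n) ^ (S n)).
  assert (HK : 0 < K) by (unfold K; apply pow_lt, lt_0_INR; lia).
  exists (C * exp 1 * K / eps). split.
  { apply Rdiv_lt_0_compat; [|lra]. apply Rmult_lt_0_compat; [|lra]. apply Rmult_lt_0_compat; [lra|apply exp_pos]. }
  intros y Hy.
  assert (Hy0 : 0 < y). { eapply Rlt_trans; [|exact Hy]. apply Rdiv_lt_0_compat; [|lra].
    apply Rmult_lt_0_compat; [|lra]. apply Rmult_lt_0_compat; [lra|apply exp_pos]. }
  rewrite Rabs_mult, (Rabs_right (exp (-y))) by (apply Rle_ge, Rlt_le, exp_pos).
  assert (H1 := Hb y (Rlt_le _ _ Hy0)).
  assert (H2 := poly_exp_bound n (1+y) ltac:(lra)). fold K in H2.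
  assert (Hey : exp (-y) = exp 1 * exp (-(1+y))) by (rewrite <- exp_plus; f_equal; ring).
  assert (Hp : 0 < exp (-y)) by apply exp_pos.
  apply Rle_lt_trans with (C * (1+y)^n * exp (-y)).
  { apply Rmult_le_compat_r; lra. }
  rewrite Hey.
  assert (He1 : 0 < exp 1) by apply exp_pos.
  apply Rle_lt_trans with (C * exp 1 * (K / (1+y))).
  { replace (C * (1 + y) ^ n * (exp 1 * exp (- (1 + y)))) with (C * exp 1 * ((1 + y) ^ n * exp (- (1 + y)))) by ring.
    apply Rmult_le_compat_l; [|exact H2]. nra. }
  assert (Hy' : C * exp 1 * K / eps < 1 + y) by lra.
  apply (Rmult_lt_compat_r eps) in Hy'; [|lra].
  replace (C * exp 1 * K / eps * eps) with (C * exp 1 * K) in Hy' by (field; lra).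
  apply (Rmult_lt_reg_r (1+y)); [lra|].
  replace (C * exp 1 * (K / (1 + y)) * (1 + y)) with (C * exp 1 * K) by (field; lra). lra.
Qed.

Lemma E_derive_at c p : is_derive (E c p) c 0.
Proof.
  apply is_derive_Reals. intros eps He.
  destruct (peval_decay (cons 0 p) eps He) as [Y [HY HYd]].
  assert (Hd : 0 < / Y) by (apply Rinv_0_lt_compat; lra).
  exists (mkposreal _ Hd). simpl. intros h Hh0 Hh.
  unfold E. destruct (Rlt_dec c c) as [Hcc|_]; [lra|].
  destruct (Rlt_dec c (c+h)) as [Hch|Hch].
  - replace (c + h - c) with h by ring.
    assert (Hhp : 0 < h) by lra. rewrite Rabs_right in Hh by lra.
    assert (HY' : Y < /h). { apply (Rmult_lt_reg_r h); [lra|]. rewrite Rinv_l by lra.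
      apply (Rmult_lt_compat_l Y) in Hh; [|lra]. rewrite Rinv_r in Hh by lra. lra. }
    specialize (HYd _ HY'). simpl in HYd.
    replace ((peval p (/ h) * exp (- / h) - 0) / h - 0) with ((0 + / h * peval p (/ h)) * exp (- / h)) by (field; lra).
    exact HYd.
  - replace ((0 - 0) / h - 0) with 0 by (field; lra). rewrite Rabs_R0. lra.
Qed.

Lemma E_derive c p : exists q, forall t, is_derive (E c p) t (E c q t).
Proof.
  destruct (peval_derive p) as [d Hd].
  destruct (peval_scal d (-1)) as [sd Hsd].
  destruct (peval_add p sd) as [s1 Hs1].
  exists (cons 0 (cons 0 s1)). intros t.
  destruct (Rlt_dec c t) as [Hct|Hct].
  - assert (H := E_derive_pos c p d t Hd Hct).
    unfold E at 2. destruct (Rlt_dec c t); [|lra].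
    refine (is_derive_val _ _ _ _ _ H). simpl. rewrite Hs1, Hsd. toR. ring.
  - destruct (Rle_lt_or_eq_dec t c (Rnot_lt_le _ _ Hct)) as [Htc|Htc].
    + unfold E at 2. destruct (Rlt_dec c t); [lra|].
      apply is_derive_ext_loc with (f := fun _ => 0).
      { generalize (locally_lt c t Htc). apply filter_imp. intros y Hy. unfold E.
        destruct (Rlt_dec c y); [lra|reflexivity]. }
      apply (is_derive_const 0 t).
    + subst t. unfold E at 2. destruct (Rlt_dec c c); [lra|]. apply E_derive_at.
Qed.

Lemma E_Dn : forall n c p, exists q, forall t, Derive_n (E c p) n t = E c q t.
Proof.
  induction n as [|n IH]; intros c p.
  - exists p; intros t; reflexivity.
  - destruct (IH c p) as [q Hq]. destruct (E_derive c q) as [q' Hq'].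
    exists q'. intros t. simpl. rewrite (Derive_ext _ _ _ Hq).
    apply is_derive_unique, Hq'.
Qed.

Lemma E_smooth c p : forall n t, ex_derive_n (E c p) n t.
Proof.
  intros [|n] t; [exact I|]. simpl.
  destruct (E_Dn n c p) as [q Hq]. destruct (E_derive c q) as [q' Hq'].
  apply ex_derive_ext with (f := E c q). { intros; symmetry; apply Hq. }
  eexists; apply Hq'.
Qed.

Lemma nat_above (r : R) : exists n : nat, r < INR n.
Proof.
  destruct (archimed (Rabs r)) as [H1 _].
  assert (Hz : (0 < up (Rabs r))%Z) by (apply lt_0_IZR; generalize (Rabs_pos r); lra).
  exists (Z.to_nat (up (Rabs r))). rewrite INR_IZR_INZ, Z2Nat.id by lia.
  generalize (Rle_abs r); lra.
Qed.

Lemma upper_exists M k eta : 0 < M -> 0 < k -> 0 < eta ->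
  exists L0 : nat, forall l, (2 <= l)%nat -> (L0 <= l)%nat ->
  exists f, admissible M k f /\ numer M k l f / denom M k l f <= (k^2 + eta) * Lam l.
Proof.
  intros HM Hk He.
  destruct (I_exists M k HM Hk) as [I [HI1 HI2]].
  assert (HIp : 0 < I) by (generalize (HI1 (3*M) ltac:(lra)); rewrite Fr_3M; lra).
  assert (Ha := rstar3M_eq M k I HM Hk HI1 HI2).
  set (R0 := Rmax (3*M) (Rmax 1 (2/eta)) + 1).
  assert (HR1 : 3*M < R0) by (unfold R0; generalize (Rmax_l (3*M) (Rmax 1 (2/eta))); lra).
  assert (HR2 : 1 <= R0) by (unfold R0; generalize (Rmax_r (3*M) (Rmax 1 (2/eta))) (Rmax_l 1 (2/eta)); lra).
  assert (HR3 : 2/eta <= R0) by (unfold R0; generalize (Rmax_r (3*M) (Rmax 1 (2/eta))) (Rmax_r 1 (2/eta)); lra).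
  assert (HF0 : 0 < Fr M k R0) by (rewrite <- (Fr_3M M k); apply Fr_lt; lra).
  assert (HF1 : Fr M k R0 < I) by (apply HI1; lra).
  set (a := PI/2 - I) in *. set (b := PI/2) in *.
  set (c := a + Fr M k R0).
  set (f := E c (cons 1 nil)).
  assert (Hfs : forall n x, ex_derive_n f n x) by apply E_smooth.
  assert (Hadm : admissible M k f).
  { split; [exact Hfs|]. split.
    - exists (Fr M k R0). split; [lra|]. intros x Hx. unfold f, E.
      destruct (Rlt_dec c x); [rewrite Ha in Hx; unfold c, a in *; lra|reflexivity].
    - exists b. split; [rewrite Ha; unfold a, b; lra|]. unfold f, E.
      destruct (Rlt_dec c b) as [_|Hn]; [|unfold c, a, b in *; lra].
      simpl. rewrite Rmult_0_r, Rplus_0_r, Rmult_1_l. apply Rgt_not_eq, exp_pos. }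
  destruct (adm_cont M k f Hadm) as [Hfc Hdfc].
  assert (Hexf : ex_RInt (fun x => f x ^ 2) a b) by (apply ex_RInt_cont_R; intros; apply cont_sq_R, Hfc).
  assert (Hexd : ex_RInt (fun x => Derive f x ^ 2) a b) by (apply ex_RInt_cont_R; intros; apply cont_sq_R, Hdfc).
  set (A := RInt (fun x => Derive f x ^ 2) a b).
  set (B := RInt (fun x => f x ^ 2) a b).
  assert (HB : 0 < B).
  { unfold B. apply (pos_int f a b ((c+b)/2)); auto. unfold c, a, b in *; lra.
    unfold f, E. destruct (Rlt_dec c ((c+b)/2)) as [_|Hn]; [|unfold c, a, b in *; lra].
    simpl. rewrite Rmult_0_r, Rplus_0_r, Rmult_1_l. apply Rgt_not_eq, exp_pos. }
  assert (HA : 0 <= A) by (apply RInt_ge_0; auto; [unfold a, b; lra| intros; apply pow2_ge_0]).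
  destruct (nat_above (2 * A / (eta * B))) as [L0 HL0].
  exists L0. intros l Hl2 HlL.
  exists f. split; [exact Hadm|].
  assert (HL := Lam_ge6 l Hl2).
  assert (HlL' : INR L0 <= INR l) by (apply le_INR; exact HlL).
  assert (HLl : INR l <= Lam l) by (unfold Lam; assert (H2 := le_INR _ _ Hl2); simpl in H2; nra).
  set (L := Lam l) in *.
  assert (HAB : A <= eta / 2 * L * B).
  { assert (H1 : 2 * A / (eta * B) < L) by lra.
    apply (Rmult_lt_compat_r (eta * B)) in H1; [|nra].
    replace (2 * A / (eta * B) * (eta * B)) with (2 * A) in H1 by (field; lra). nra. }
  destruct (numer_int M k I l HM Hk HI1 HI2 f Hfc Hdfc) as [Hex Heq].
  rewrite Ha in Hex, Heq. fold a b in Hex, Heq.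
  assert (HN : RInt (fun x => (Derive f x)^2 + V M k l x * (f x)^2) a b <= A + (k^2 + eta/2) * L * B).
  { rewrite Heq. unfold A, B. rewrite <- RInt_scal_R by exact Hexf.
    rewrite <- RInt_plus_R; [| exact Hexd |].
    2: { apply ex_RInt_cont_R. intros. apply cont_mult_R. apply continuous_const. apply cont_sq_R, Hfc. }
    apply RInt_le; [unfold a, b; lra|exact Hex| |].
    - apply ex_RInt_cont_R. intros. apply cont_plus_R. apply cont_sq_R, Hdfc.
      apply cont_mult_R. apply continuous_const. apply cont_sq_R, Hfc.
    - intros x Hx. destruct (u_mid M k I l HM Hk HI1 HI2 x Hx) as [Hu1 [Hu2 _]].
      apply Rplus_le_compat_l.
      destruct (Rlt_dec c x) as [Hcx|Hcx].
      + destruct (rof_big M k I HM Hk HI1 HI2 R0 x ltac:(lra)) as [_ Hr].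
        { unfold c, a, b in *. lra. }
        assert (Hux : u M k x <= eta / 2).
        { rewrite Hu1. apply Rle_trans with (/ R0). apply Rinv_le_contravar; lra.
          apply Rle_trans with (/ (2/eta)). apply Rinv_le_contravar. apply Rdiv_lt_0_compat; lra. lra.
          right; field; lra. }
        assert (Hux1 : u M k x <= 1).
        { rewrite Hu1. apply Rle_trans with (/ R0). apply Rinv_le_contravar; lra.
          rewrite <- Rinv_1. apply Rinv_le_contravar; lra. }
        assert (Hh := Hp_upper M k L (u M k x) HM HL ltac:(lra)).
        assert (Hu2' : u M k x ^ 2 <= eta / 2) by (simpl; nra).
        assert (Hh2 : Hp M k L (u M k x) <= (k^2 + eta/2) * L) by nra.
        assert (0 <= f x ^ 2) by apply pow2_ge_0.
        fold L. apply Rmult_le_compat_r; lra.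
      + assert (Hf0 : f x = 0) by (unfold f, E; destruct (Rlt_dec c x); [contradiction|reflexivity]).
        rewrite Hf0. simpl. lra. }
  assert (HD : 0 < denom M k l f).
  { unfold denom. rewrite Ha. fold a b L.
    assert (Hc : 0 < 12 * M / (L * (L - 2))) by (apply Rdiv_lt_0_compat; nra).
    assert (0 <= f b ^ 2) by apply pow2_ge_0. fold B. nra. }
  apply (Rmult_le_reg_r (denom M k l f)); [exact HD|].
  replace (numer M k l f / denom M k l f * denom M k l f) with (numer M k l f) by (field; lra).
  unfold numer, denom. rewrite Ha. fold a b L B.
  set (T := f b ^ 2).
  assert (HT : 0 <= T) by apply pow2_ge_0.
  assert (Hid : (k ^ 2 + eta) * L * (12 * M / (L * (L - 2)) * T) = 12 * M * (k^2 + eta) / (L - 2) * T) by (field; lra).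
  assert (Hcmp : 6 * M * k ^ 2 / (L - 2) * T <= 12 * M * (k^2 + eta) / (L - 2) * T).
  { apply Rmult_le_compat_r; [exact HT|]. unfold Rdiv. apply Rmult_le_compat_r.
    apply Rlt_le, Rinv_0_lt_compat; lra. assert (0 <= k^2) by apply pow2_ge_0. nra. }
  nra.
Qed.

Theorem lemma4p11 (M k eta : R) (HM : 0 < M) (Hk : 0 < k) (Heta : 0 < eta) :
  exists L0 : nat, forall l : nat, (2 <= l)%nat -> (L0 <= l)%nat ->
    Rbar_le (Finite (k ^ 2 / 2 * Lam l)) (omega2 M k l) /\
    Rbar_le (omega2 M k l) (Finite ((k ^ 2 + eta) * Lam l)).
Proof.
  destruct (I_exists M k HM Hk) as [I [HI1 HI2]].
  destruct (upper_exists M k eta HM Hk Heta) as [L0 HL0].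
  exists L0. intros l Hl2 HlL.
  destruct (Glb_Rbar_correct (fun q => exists f, admissible M k f /\ q = numer M k l f / denom M k l f)) as [Hlb Hglb].
  split.
  - unfold omega2. apply Hglb. intros q [f [Hf ->]]. simpl.
    apply (lower_bound M k I l HM Hk HI1 HI2 Hl2 f Hf).
  - destruct (HL0 l Hl2 HlL) as [f [Hf Hle]].
    unfold omega2. eapply Rbar_le_trans. apply Hlb. exists f. split; [exact Hf|reflexivity].
    simpl. exact Hle.
Qed.
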